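(* For $0 < s < 2$ define $T^{-1}(s) = \sqrt{1 - \frac{1}{4}s^2} - s$. Let $s_1^* = \sqrt{\frac{1}{3}(2+\sqrt{2})}$ and define \[\sigma = \sigma(s_1) = \begin{cases} \frac{1}{4}\left(-s_1 - 2T^{-1}(s_1) + \sqrt{8 - (s_1 - 2T^{-1}(s_1))^2}\right), & \text{if } s_1 \leq s_1^*,\\ \frac{1}{5}\left(\sqrt{20 - s_1^2} - 2s_1\right), & \text{otherwise.} \end{cases}\] Let $\ell_1 = \sqrt{1 - T^{-1}(s_1)^2} - \frac{s_1}{2}$. Define $x_{+1} = \frac{s_1}{2} + \frac{\sigma}{2\sqrt{2}}$, $x_{+2} = \frac{s_1}{2} + 0.645\sigma$, \[ y_{+1} = \begin{cases} T^{-1}(s_1) + \sigma + \frac{\sigma}{2\sqrt{2}}, &\text{if } s_1 \leq s_1^*,\\ \frac{\sigma}{2} + \frac{\sigma}{2\sqrt{2}}, &\text{otherwise,} \end{cases}\qquad y_{+2} = \begin{cases} T^{-1}(s_1) + 2 \cdot 0.645\sigma, &\text{if } s_1 \leq s_1^*,\\ -\frac{\sigma}{2} + 2 \cdot 0.645\sigma, &\text{otherwise,} \end{cases}\] and $F_{TP_1}(s_1) = x_{+1}^2 + y_{+1}^2$, $F_{TP_2}(s_1) = x_{+2}^2 + y_{+2}^2$. Then for all $s_1$ with $0.295 \leq s_1 \leq \sqrt{8/5}$ and $\ell_1 \leq s_1$, we have (1) $F_{TP_1}(s_1) \leq 1$ and (2) $F_{TP_2}(s_1) \leq 1$.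
   Context: Geometric meaning (not needed for the statement): $T^{-1}(s)$ is the highest possible $y$-coordinate of the bottom side of an axis-parallel square of side $s$ inside the unit disk centered at the origin; $\sigma(s_1)$ is the side length of the largest square fitting into the region of the disk to the left of such a topmost square of side $s_1$ and above the line through its bottom side; $\ell_1$ is the length of the bottom boundary of that region. *)

(* Defs.v *)
From Stdlib Require Import Reals.
Open Scope R_scope.

Definition Tinv (s : R) : R := sqrt (1 - / 4 * s ^ 2) - s.

Definition s1_star : R := sqrt (/ 3 * (2 + sqrt 2)).

Definition sigma (s1 : R) : R :=
  if Rle_dec s1 s1_star then
    / 4 * (- s1 - 2 * Tinv s1 + sqrt (8 - (s1 - 2 * Tinv s1) ^ 2))
  else / 5 * (sqrt (20 - s1 ^ 2) - 2 * s1).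

Definition ell1 (s1 : R) : R := sqrt (1 - Tinv s1 ^ 2) - s1 / 2.

Definition xp1 (s1 : R) : R := s1 / 2 + sigma s1 / (2 * sqrt 2).
Definition xp2 (s1 : R) : R := s1 / 2 + (645 / 1000) * sigma s1.

Definition yp1 (s1 : R) : R :=
  if Rle_dec s1 s1_star then Tinv s1 + sigma s1 + sigma s1 / (2 * sqrt 2)
  else sigma s1 / 2 + sigma s1 / (2 * sqrt 2).

Definition yp2 (s1 : R) : R :=
  if Rle_dec s1 s1_star then Tinv s1 + 2 * ((645 / 1000) * sigma s1)
  else - (sigma s1 / 2) + 2 * ((645 / 1000) * sigma s1).

Definition F_TP1 (s1 : R) : R := xp1 s1 ^ 2 + yp1 s1 ^ 2.
Definition F_TP2 (s1 : R) : R := xp2 s1 ^ 2 + yp2 s1 ^ 2.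

(* Main.v *)
Require Import Defs.
From Stdlib Require Import Reals Lra Psatz.
Open Scope R_scope.

Lemma sqrt_lb x y : 0 <= x -> x*x <= y -> x <= sqrt y.
Proof. intros H1 H2. rewrite <- (sqrt_square x H1). apply sqrt_le_1_alt; lra. Qed.

Lemma sqrt_ub x y : 0 <= x -> y <= x*x -> sqrt y <= x.
Proof. intros H1 H2. rewrite <- (sqrt_square x H1). apply sqrt_le_1_alt; lra. Qed.

Lemma sqrt2_bounds : 1414213/1000000 <= sqrt 2 <= 1414214/1000000.
Proof. split; [apply sqrt_lb|apply sqrt_ub]; lra. Qed.

Lemma k_bounds : 353553/1000000 <= / (2 * sqrt 2) <= 353554/1000000.
Proof.
  pose proof sqrt2_bounds as [H1 H2].
  assert (Hk : / (2 * sqrt 2) * (2 * sqrt 2) = 1) by (apply Rinv_l; lra).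
  assert (0 < / (2 * sqrt 2)) by (apply Rinv_0_lt_compat; lra).
  set (k := / (2 * sqrt 2)) in *. split; nra.
Qed.

Lemma sstar_bounds : 10668/10000 <= s1_star <= 10669/10000.
Proof.
  pose proof sqrt2_bounds as [H1 H2]. unfold s1_star.
  split; [apply sqrt_lb|apply sqrt_ub]; lra.
Qed.

Lemma sq_le x y : 0 <= x -> x <= y -> x^2 <= y^2.
Proof. intros; nra. Qed.

Lemma mul_le x y X Y : 0 <= x -> x <= X -> 0 <= y -> y <= Y -> x*y <= X*Y.
Proof. intros; nra. Qed.

Lemma case1_box (l h al ah bl bh m s : R) :
  l <= s -> s <= h -> 0 <= l -> s <= s1_star ->
  2*sqrt(1 - /4*s^2) <= 3*s ->
  0 <= al -> al*al <= 1 - /4*(h*h) -> 0 <= ah -> 1 - /4*(l*l) <= ah*ah ->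
  0 <= m -> (m <= 3*l - 2*ah \/ m = 0) ->
  0 <= 3*h - 2*al -> 0 <= bl -> bl*bl <= 8 - (3*h-2*al)*(3*h-2*al) ->
  0 <= bh -> 8 - m*m <= bh*bh ->
  0 <= (l - 2*ah + bl)/4 ->
  0 <= (/2 + 645/1000/4)*l - (645/1000/2)*ah + (645/1000/4)*bl ->
  0 <= (1-645/1000)*al + (645/1000/2-1)*h + (645/1000/2)*bl ->
  0 <= al - h + (l - 2*ah + bl)/4 * (1 + 353553/1000000) ->
  ((/2 + 645/1000/4)*h - (645/1000/2)*al + (645/1000/4)*bh)^2
   + ((1-645/1000)*ah + (645/1000/2-1)*l + (645/1000/2)*bh)^2 <= 1 ->
  (h/2 + (h - 2*al + bh)/4 * (353554/1000000))^2
   + (ah - l + (h - 2*al + bh)/4 * (1 + 353554/1000000))^2 <= 1 ->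
  F_TP1 s <= 1 /\ F_TP2 s <= 1.
Proof.
  intros Hl Hh Hl0 Hs Hu Hal0 Hal Hah0 Hah Hm0 Hm Huh Hbl0 Hbl Hbh0 Hbh
    Hsg Hx2 Hy2 Hy1 HF2 HF1.
  unfold F_TP1, F_TP2, xp1, xp2, yp1, yp2, Defs.sigma, Tinv.
  destruct (Rle_dec s s1_star) as [_|C]; [|lra].
  pose proof k_bounds as [Hk1 Hk2].
  set (k := / (2 * sqrt 2)) in *.
  set (a := sqrt (1 - / 4 * s ^ 2)) in *.
  assert (Hs2 : l*l <= s^2 <= h*h) by (split; nra).
  assert (Ha1 : al <= a) by (apply sqrt_lb; lra).
  assert (Ha2 : a <= ah) by (apply sqrt_ub; lra).
  set (b := sqrt (8 - (s - 2 * (a - s)) ^ 2)).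
  assert (Hu1 : m <= 3*s - 2*a) by (destruct Hm; lra).
  assert (Hu2 : (s - 2 * (a - s)) ^ 2 <= (3*h-2*al)*(3*h-2*al)) by
    (replace (s - 2 * (a - s)) with (3*s - 2*a) by ring; apply Rsqr_incr_1 in Hu1; unfold Rsqr in *; nra).
  assert (Hu3 : m*m <= (s - 2 * (a - s)) ^ 2) by
    (replace (s - 2 * (a - s)) with (3*s - 2*a) by ring; nra).
  assert (Hb1 : bl <= b) by (apply sqrt_lb; lra).
  assert (Hb2 : b <= bh) by (apply sqrt_ub; lra).
  set (sg := / 4 * (- s - 2 * (a - s) + b)).
  assert (Hsg1 : (l - 2*ah + bl)/4 <= sg) by (unfold sg; lra).
  assert (Hsg2 : sg <= (h - 2*al + bh)/4) by (unfold sg; lra).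
  assert (Hsk : sg * k <= (h - 2*al + bh)/4 * (353554/1000000)) by (apply mul_le; lra).
  assert (Hsk' : (l - 2*ah + bl)/4 * (353553/1000000) <= sg * k) by (apply mul_le; lra).
  replace (sg / (2 * sqrt 2)) with (sg * k) by (unfold k, Rdiv; ring).
  split.
  - eapply Rle_trans; [|exact HF1].
    apply Rplus_le_compat; apply sq_le; lra.
  - eapply Rle_trans; [|exact HF2].
    apply Rplus_le_compat; apply sq_le; unfold sg in *; lra.
Qed.
Lemma case2_box (l h cl ch s : R) :
  l <= s -> s <= h -> 0 <= l -> s1_star < s ->
  0 <= cl -> cl*cl <= 20 - h*h -> 0 <= ch -> 20 - l*l <= ch*ch ->
  0 <= (cl - 2*h)/5 ->
  (h/2 + (ch - 2*l)/5 * (353554/1000000))^2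
   + ((ch - 2*l)/5 / 2 + (ch - 2*l)/5 * (353554/1000000))^2 <= 1 ->
  (h/2 + 645/1000 * ((ch - 2*l)/5))^2
   + ((- / 2 + 2 * (645/1000)) * ((ch - 2*l)/5))^2 <= 1 ->
  F_TP1 s <= 1 /\ F_TP2 s <= 1.
Proof.
  intros Hl Hh Hl0 Hs Hcl0 Hcl Hch0 Hch Hsg HF1 HF2.
  unfold F_TP1, F_TP2, xp1, xp2, yp1, yp2, Defs.sigma.
  destruct (Rle_dec s s1_star) as [C|_]; [lra|].
  pose proof k_bounds as [Hk1 Hk2].
  set (k := / (2 * sqrt 2)) in *.
  assert (Hs2 : l*l <= s^2 <= h*h) by (split; nra).
  set (c := sqrt (20 - s ^ 2)).
  assert (Hc1 : cl <= c) by (apply sqrt_lb; lra).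
  assert (Hc2 : c <= ch) by (apply sqrt_ub; lra).
  set (sg := / 5 * (c - 2 * s)).
  assert (Hsg1 : (cl - 2*h)/5 <= sg) by (unfold sg; lra).
  assert (Hsg2 : sg <= (ch - 2*l)/5) by (unfold sg; lra).
  assert (Hsk : sg * k <= (ch - 2*l)/5 * (353554/1000000)) by (apply mul_le; lra).
  assert (0 <= sg * k) by (apply Rmult_le_pos; lra).
  replace (sg / (2 * sqrt 2)) with (sg * k) by (unfold k, Rdiv; ring).
  split.
  - eapply Rle_trans; [|exact HF1].
    apply Rplus_le_compat; apply sq_le; lra.
  - eapply Rle_trans; [|exact HF2].
    apply Rplus_le_compat; apply sq_le; lra.
Qed.

Lemma lower_s (s : R) : 295/1000 <= s -> s <= 13/10 -> ell1 s <= s ->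
  2 * sqrt (1 - /4 * s^2) <= 3 * s.
Proof.
  intros H1 H2 H3. unfold ell1, Tinv in H3.
  assert (Hq : 0 <= 1 - /4 * s^2) by nra.
  set (a := sqrt (1 - /4 * s^2)) in *.
  assert (Ha : a * a = 1 - /4 * s^2) by (apply sqrt_sqrt; lra).
  assert (Ha0 : 0 <= a) by apply sqrt_pos.
  assert (Hq2 : 0 <= 1 - (a - s)^2) by nra.
  assert (Hs : sqrt (1 - (a - s)^2) * sqrt (1 - (a - s)^2) = 1 - (a - s)^2)
    by (apply sqrt_sqrt; lra).
  assert (H4 : 1 - (a - s)^2 <= (3*s/2)^2).
  { rewrite <- Hs. assert (0 <= sqrt (1 - (a - s) ^ 2)) by apply sqrt_pos. nra. }
  nra.
Qed.

Theorem lemma6 (s1 : R) :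
  295 / 1000 <= s1 -> s1 <= sqrt (8 / 5) -> ell1 s1 <= s1 ->
  F_TP1 s1 <= 1 /\ F_TP2 s1 <= 1.
Proof.
  intros H1 H2 H3.
  assert (Hh : s1 <= 253/200) by (eapply Rle_trans; [exact H2| apply sqrt_ub; lra]).
  pose proof (lower_s s1 H1 ltac:(lra) H3) as Hu.
  assert (Hl : 1581/2500 <= s1).
  { assert (Hq : 0 <= 1 - /4 * s1^2) by nra.
    assert (Ha : sqrt (1 - /4 * s1^2) * sqrt (1 - /4 * s1^2) = 1 - /4 * s1^2) by (apply sqrt_sqrt; lra).
    assert (0 <= sqrt (1 - /4 * s1^2)) by apply sqrt_pos.
    assert (4/10 <= s1^2) by nra.
    nra. }
  pose proof sstar_bounds as [Hs1 Hs2].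
  destruct (Rle_dec s1 s1_star) as [C|C].
  destruct (Rle_dec s1 (3179/5000)) as [D0|D0].
  apply ((case1_box (1581/2500) (3179/5000) (237031/250000) (948693/1000000) (565681/200000) (707107/250000) (0/1)) s1); try lra.
  destruct (Rle_dec s1 (63919/100000)) as [D1|D1].
  apply ((case1_box (3179/5000) (63919/100000) (473777/500000) (1517/1600) (2828337/1000000) (1414203/500000) (223/20000)) s1); try lra.
  destruct (Rle_dec s1 (32299/50000)) as [D2|D2].
  apply ((case1_box (63919/100000) (32299/50000) (473201/500000) (189511/200000) (1414033/500000) (1414169/500000) (1123/50000)) s1); try lra.
  destruct (Rle_dec s1 (65277/100000)) as [D3|D3].
  apply ((case1_box (32299/50000) (65277/100000) (236309/250000) (946403/1000000) (2827613/1000000) (2828067/1000000) (22567/500000)) s1); try lra.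
  destruct (Rle_dec s1 (16489/25000)) as [D4|D4].
  apply ((case1_box (65277/100000) (16489/25000) (944057/1000000) (945237/1000000) (88343/31250) (1413807/500000) (16959/250000)) s1); try lra.
  destruct (Rle_dec s1 (33657/50000)) as [D5|D5].
  apply ((case1_box (16489/25000) (33657/50000) (470829/500000) (472029/500000) (56503/20000) (2826977/1000000) (22641/250000)) s1); try lra.
  destruct (Rle_dec s1 (68671/100000)) as [D6|D6].
  apply ((case1_box (33657/50000) (68671/100000) (187841/200000) (941659/1000000) (2822583/1000000) (2825151/1000000) (68051/500000)) s1); try lra.
  destruct (Rle_dec s1 (35693/50000)) as [D7|D7].
  apply ((case1_box (68671/100000) (35693/50000) (934131/1000000) (469603/500000) (281519/100000) (352823/125000) (90859/500000)) s1); try lra.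
  destruct (Rle_dec s1 (37051/50000)) as [D8|D8].
  apply ((case1_box (35693/50000) (37051/50000) (232207/250000) (233533/250000) (701181/250000) (2815191/1000000) (68329/250000)) s1); try lra.
  destruct (Rle_dec s1 (38409/50000)) as [D9|D9].
  apply ((case1_box (37051/50000) (38409/50000) (184659/200000) (928829/1000000) (2791107/1000000) (112189/40000) (182701/500000)) s1); try lra.
  destruct (Rle_dec s1 (39767/50000)) as [D10|D10].
  apply ((case1_box (38409/50000) (39767/50000) (114691/125000) (28853/31250) (554849/200000) (697777/250000) (114487/250000)) s1); try lra.
  destruct (Rle_dec s1 (16993/20000)) as [D11|D11].
  apply ((case1_box (39767/50000) (16993/20000) (36211/40000) (917529/1000000) (2730341/1000000) (2774247/1000000) (275481/500000)) s1); try lra.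
  destruct (Rle_dec s1 (22599/25000)) as [D12|D12].
  apply ((case1_box (16993/20000) (22599/25000) (223007/250000) (226319/250000) (2671917/1000000) (2730343/1000000) (369199/500000)) s1); try lra.
  destruct (Rle_dec s1 (23957/25000)) as [D13|D13].
  apply ((case1_box (22599/25000) (23957/25000) (438869/500000) (892029/1000000) (2597503/1000000) (2671919/1000000) (463911/500000)) s1); try lra.
  apply ((case1_box (23957/25000) (10669/10000) (845831/1000000) (877739/1000000) (1196119/500000) (519501/200000) (559681/500000)) s1); try lra.
  - apply ((case2_box (2667/2500) (253/200) (857899/200000) (2171517/500000)) s1); try lra.
Qed.
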